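(* Let $\Bbbk$ be a field, $S=\Bbbk[x_1,\dots,x_n]$, $\mathbf{a}\in\mathbb{N}^n$ with all $a_k\ge1$, and $I\subset S$ a monomial ideal all of whose minimal generators $x^{\mathbf{c}}$ satisfy $\mathbf{c}\preceq\mathbf{a}$. For every $i\in[n]$ and every integer $j$ with $1\le j\le a_i+1$, the squarefree monomial ideals $\mathrm{BM}_{\mathbf{a}+\mathbf{e}_i}(I^{\triangleleft\langle i,j\rangle})$ and $\mathrm{Infl}_{(i,j)}(\mathrm{BM}_{\mathbf{a}}(I))$ (each in a polynomial ring with $|\mathbf{a}|+n+1$ variables) coincide after a suitable bijective identification of the variables of the two polynomial rings.
   Context: $\preceq$ is the componentwise order, $|\mathbf{a}|=\sum_k a_k$, $x^{\mathbf{b}}=\prod_k x_k^{b_k}$, $\mathbf{e}_i$ the $i$-th unit vector. For $m\in\mathbb{Z}$, $\tau_{\langle i,m\rangle}$ fixes coordinates $k\neq i$ and sends $b_i$ to $b_i+1$ if $b_i\ge m$, to $b_i$ otherwise. For $j\ge1$ and $I=(x^{\mathbf{c}_1},\dots,x^{\mathbf{c}_r})$, $I^{\triangleleft\langle i,j\rangle}:=(x^{\tau_{\langle i,j\rangle}(\mathbf{c}_1)},\dots,x^{\tau_{\langle i,j\rangle}(\mathbf{c}_r)})$ (its generators have exponents $\preceq\mathbf{a}+\mathbf{e}_i$). Alexander dual: $I^{\vee\mathbf{a}}=(x^{\mathbf{b}}\mid\mathbf{b}\in\mathbb{N}^n,\ \mathbf{b}\preceq\mathbf{a},\ x^{\mathbf{a}-\mathbf{b}}\notin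 I)$. Let $\tilde S=\Bbbk[x_{k,m}\mid 1\le k\le n,\ 1\le m\le a_k+1]$. For a monomial ideal $J$ of $S$ with generators $x^{\mathbf{b}}$, $\mathbf{b}\preceq\mathbf{a}$, let $\mathrm{pol}_{\mathbf{a}+\mathbf{1}}(J)$ be the ideal of $\tilde S$ generated by $\prod_k x_{k,1}x_{k,2}\cdots x_{k,b_k}$ and $\mathrm{pol}^{\mathbf{a}+\mathbf{1}}(J)$ the ideal generated by $\prod_k x_{k,a_k+1}x_{k,a_k}\cdots x_{k,a_k-b_k+2}$, over the minimal generators $x^{\mathbf{b}}$ of $J$. The Bier–Murai ideal is $$\mathrm{BM}_{\mathbf{a}}(I)=\mathrm{pol}_{\mathbf{a}+\mathbf{1}}(I)+\mathrm{pol}^{\mathbf{a}+\mathbf{1}}(I^{\vee\mathbf{a}})+\Big(\prod_{m=1}^{a_l+1}x_{l,m}\ \Big|\ l=1,\dots,n\Big)\subset\tilde S.$$ For a squarefree monomial ideal $J$ of a polynomial ring $T$ and a variable $y$ of $T$, the inflation $\mathrm{Infl}_y(J)\subset T[y']$ ($y'$ a new variable) is the ideal obtained by replacing $y$ by $y\cdot y'$ in each minimal generator of $J$; $\mathrm{Infl}_{(i,j)}$ denotes inflation at $x_{i,j}$. *)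

(* Defs.v *)
From HB Require Import structures.
From mathcomp Require Import all_boot all_order all_algebra.
From mathcomp Require Import mpoly.

Set Implicit Arguments.
Unset Strict Implicit.
Unset Printing Implicit Defensive.

Import GRing.Theory.

Definition expv (n : nat) := {ffun 'I_n -> nat}.

Definition lev n (b c : expv n) : bool := [forall k, b k <= c k].

(* Minimal elements of a finite generating list w.r.t. a divisibility relation:
   these are the minimal generators of the monomial ideal generated by the list. *)
Definition minimal_of (T : eqType) (r : rel T) (G : seq T) : seq T :=
  [seq g <- undup G | ~~ has (fun h => (h != g) && r h g) G].

Definition mingens n (C : seq (expv n)) := minimal_of (@lev n) C.

(* x^b lies in the monomial ideal generated by the monomials x^c, c in C *)
Definition in_mono n (C : seq (expv n)) (b : expv n) : bool :=
  has (fun c => lev c b) C.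

Definition box n (a : expv n) : seq (expv n) :=
  [seq b <- [seq [ffun k => (f k : nat)] | f : {ffun 'I_n -> 'I_(\max_(k < n) a k).+1}]
     | lev b a].

Definition subv n (a b : expv n) : expv n := [ffun k => a k - b k].

(* generators of the Alexander dual I^{\vee a} *)
Definition dual_gens n (a : expv n) (C : seq (expv n)) : seq (expv n) :=
  [seq b <- box a | ~~ in_mono C (subv a b)].

Definition addE n (a : expv n) (i : 'I_n) : expv n := [ffun k => a k + (k == i)].

Definition tau n (i : 'I_n) (m : nat) (b : expv n) : expv n :=
  [ffun k => if (k == i) && (m <= b k) then b k + 1 else b k].

Definition tri n (i : 'I_n) (j : nat) (C : seq (expv n)) : seq (expv n) :=
  [seq tau i j c | c <- mingens C].

(* Variables x_{k,m}, 1 <= m <= a_k + 1, of \tilde S; the element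
   Tagged k (m' : 'I_(a k).+1) stands for x_{k, m'+1}. *)
Definition V n (a : expv n) : finType := {k : 'I_n & 'I_(a k).+1}.

Definition var n (a : expv n) (k : 'I_n) (m : nat) : V a :=
  Tagged (fun k => 'I_(a k).+1) (@inord (a k) m.-1).

(* squarefree monomials as sets of variables *)
Definition polL n (a : expv n) (b : expv n) : {set V a} :=
  [set v : V a | (tagged v : nat).+1 <= b (tag v)].
Definition polU n (a : expv n) (b : expv n) : {set V a} :=
  [set v : V a | a (tag v) + 2 - b (tag v) <= (tagged v : nat).+1].
Definition column n (a : expv n) (l : 'I_n) : {set V a} :=
  [set v : V a | tag v == l].

Definition BM n (a : expv n) (C : seq (expv n)) : seq {set V a} :=
  [seq polL a b | b <- mingens C]
  ++ [seq polU a b | b <- mingens (dual_gens a C)]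
  ++ [seq column a l | l <- enum 'I_n].

Definition mingens_set (T : finType) (G : seq {set T}) : seq {set T} :=
  minimal_of (fun A B : {set T} => A \subset B) G.

(* Inflation at variable y; the new variable y' is None. *)
Definition infl (T : finType) (y : T) (G : seq {set T}) : seq {set option T} :=
  [seq (if y \in A then None |: (Some @: A) else Some @: A) | A : {set T} <- mingens_set G].

(* The polynomial ring over the variables W is {mpoly R[#|W|]},
   variable w being 'X_(enum_rank w). *)
Definition monoP (R : nzRingType) (W : finType) (A : {set W}) : {mpoly R[#|W|]} :=
  (\prod_(w in A) 'X_(enum_rank w))%R.

Definition in_ideal (R : nzRingType) (N : nat) (G : seq {mpoly R[N]}) (p : {mpoly R[N]}) : Prop :=
  exists c : seq {mpoly R[N]}, (p = \sum_(l < size G) nth 0 c l * nth 0 G l)%R.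

Definition ideal_eq (R : nzRingType) (N : nat) (G1 G2 : seq {mpoly R[N]}) : Prop :=
  forall p, in_ideal G1 p <-> in_ideal G2 p.

(* Main.v *)
Require Import Defs.
From mathcomp Require Import all_boot all_order all_algebra.
From mathcomp Require Import mpoly.
From mathcomp Require Import zify.

Set Implicit Arguments.
Unset Strict Implicit.
Unset Printing Implicit Defensive.


Section Minimal.
Variable (T : eqType) (r : rel T) (mu : T -> nat).
Hypothesis rtrans : transitive r.
Hypothesis rmu : forall x y, x != y -> r x y -> mu x < mu y.

Lemma minimal_sub G g : g \in minimal_of r G -> g \in G.
Proof. by rewrite mem_filter mem_undup => /andP[]. Qed.

Lemma minimal_below G g : g \in G -> reflexive r -> exists2 h, h \in minimal_of r G & r h g.
Proof.
move=> gG rr; suff H : forall N g, mu g < N -> g \in G -> exists2 h, h \in minimal_of r G & r h g.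
  exact: (H (mu g).+1).
elim=> [//|N IH] {}g ltg {}gG.
case: (boolP (has (fun h => (h != g) && r h g) G)) => [/hasP[h hG /andP[hg rhg]]|nh].
  have [h' h'm rh'] := IH h (leq_trans (rmu hg rhg) ltg) hG.
  by exists h' => //; apply: rtrans rhg.
exists g => //; rewrite mem_filter mem_undup gG andbT; exact: nh.
Qed.
End Minimal.

Lemma levP n (b c : expv n) : reflect (forall k, b k <= c k) (lev b c).
Proof. exact: forallP. Qed.

Lemma lev_refl n : reflexive (@lev n).
Proof. by move=> b; apply/levP. Qed.

Lemma lev_trans n : transitive (@lev n).
Proof. move=> b c d /levP H1 /levP H2; apply/levP => k; exact: leq_trans (H1 k) (H2 k). Qed.

Lemma lev_mu n (b c : expv n) : b != c -> lev b c -> \sum_k b k < \sum_k c k.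
Proof.
move=> nbc /levP bc.
have [k bk] : exists k, b k < c k.
  apply/existsP; apply: contraR nbc; rewrite negb_exists => /forallP H.
  apply/eqP/ffunP => k; apply/eqP; rewrite eqn_leq bc /=; move: (H k); by rewrite -leqNgt.
rewrite [X in _ < X](bigD1 k) //= [X in X < _](bigD1 k) //=.
rewrite -addSn leq_add //; apply: leq_sum => l _; exact: bc.
Qed.

Lemma mingens_below n (C : seq (expv n)) c : c \in C -> exists2 h, h \in mingens C & lev h c.
Proof. move=> cC; apply: (minimal_below (@lev_trans n) (@lev_mu n) cC); exact: lev_refl. Qed.

Lemma mingens_sub n (C : seq (expv n)) c : c \in mingens C -> c \in C.
Proof. exact: minimal_sub. Qed.

Lemma mingens_set_below (T : finType) (G : seq {set T}) A : A \in G -> exists2 h, h \in mingens_set G & h \subset A.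
Proof.
move=> AG; apply: (minimal_below (r := fun A B : {set T} => A \subset B) (mu := fun A => #|A|)) => //.
- move=> x y z; exact: subset_trans.
- move=> x y nxy sxy; apply: proper_card; by rewrite properEneq nxy.
Qed.

Lemma mingens_set_sub (T : finType) (G : seq {set T}) A : A \in mingens_set G -> A \in G.
Proof. exact: minimal_sub. Qed.

Lemma mem_box n (a b : expv n) : (b \in box a) = lev b a.
Proof.
rewrite /box mem_filter andb_idr // => /forallP ba.
apply/imageP; exists [ffun k => inord (b k) : 'I_(\max_(k < n) a k).+1] => //.
apply/ffunP => k; rewrite !ffunE inordK //; rewrite ltnS (leq_trans (ba k)) //; exact: leq_bigmax.
Qed.


Ltac ifs := repeat match goal with |- context[if ?b then _ else _] =>
  lazymatch b with context[if _ then _ else _] => fail | _ => case: (boolP b) => ? end end.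

Section Sigma.
Variables (n : nat) (a : expv n) (i : 'I_n) (j : nat).
Hypothesis j1 : 0 < j.
Hypothesis ja : j <= a i + 1.
Local Notation a' := (addE a i).

Lemma addEE k : a' k = a k + (k == i). Proof. by rewrite ffunE. Qed.

Definition sig (v : V a') : option (V a) :=
  let k := tag v in let m := (tagged v : nat) in
  if (k == i) && (m == j) then None
  else Some (Tagged (fun k => 'I_(a k).+1) (@inord (a k) (if (k == i) && (j < m) then m.-1 else m))).

Definition sinv (z : option (V a)) : V a' :=
  match z with
  | None => Tagged (fun k => 'I_(a' k).+1) (@inord (a' i) j)
  | Some v => Tagged (fun k => 'I_(a' k).+1)
     (@inord (a' (tag v)) (if (tag v == i) && (j <= tagged v) then (tagged v : nat).+1 else tagged v))
  end.

Lemma ltA k x : x <= a k + (k == i) -> x < (a' k).+1.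
Proof. by rewrite addEE ltnS. Qed.

Lemma sigK : cancel sig sinv.
Proof.
case=> k m; rewrite /sig /=.
have mb : (m : nat) <= a k + (k == i) by rewrite -addEE -ltnS; exact: ltn_ord m.
case: (eqVneq k i) => [ek|nk] /=.
  subst k; rewrite eqxx addn1 in mb; case: (eqVneq (m : nat) j) => [em|nm] /=.
    congr existT; apply: val_inj; rewrite /= inordK //; apply: ltA; rewrite eqxx; lia.
  congr existT; apply: val_inj; rewrite /= eqxx /=.
  have H : (if j < m then m.-1 else m) < (a i).+1 by case: ifP; lia.
  rewrite (inordK H) inordK; last by apply: ltA; rewrite eqxx; ifs; lia.
  ifs; lia.
congr existT; apply: val_inj; rewrite /= (negbTE nk) /= in mb *.
rewrite addn0 in mb.
rewrite inordK /= ?inordK //; apply: ltA; rewrite (negbTE nk); rewrite inordK; lia.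
Qed.

Lemma sinvK : cancel sinv sig.
Proof.
case=> [[k m]|]; rewrite /sig /=.
  have mb : (m : nat) <= a k by rewrite -ltnS; exact: ltn_ord m.
  case: (eqVneq k i) => [ek|nk] /=.
    subst k; rewrite inordK; last by apply: ltA; rewrite eqxx; ifs; lia.
    ifs; try lia; congr Some; congr existT; apply: val_inj; rewrite /= inordK //=; lia.
  rewrite inordK /=; last by apply: ltA; rewrite (negbTE nk); lia.
  congr Some; congr existT; apply: val_inj; rewrite /= inordK //.
by rewrite inordK ?eqxx //; apply: ltA; rewrite eqxx; lia.
Qed.

Lemma sig_bij : bijective sig.
Proof. exact: Bijective sigK sinvK. Qed.

Lemma mem_sig (X : {set V a'}) z : (z \in sig @: X) = (sinv z \in X).
Proof.
apply/imsetP/idP => [[x xX ->]|H]; first by rewrite sigK.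
by exists (sinv z); rewrite ?sinvK.
Qed.

End Sigma.



Definition infl1 (T : finType) (y : T) (A : {set T}) : {set option T} :=
  if y \in A then None |: (Some @: A) else Some @: A.

Lemma infl1_None (T : finType) (y : T) (A : {set T}) : (None \in infl1 y A) = (y \in A).
Proof.
rewrite /infl1; case: ifP => H; first by rewrite !inE eqxx.
by apply/imsetP => -[].
Qed.

Lemma infl1_Some (T : finType) (y : T) (A : {set T}) v : (Some v \in infl1 y A) = (v \in A).
Proof.
have H : (Some v \in Some @: A) = (v \in A) by apply: mem_imset => x z [].
by rewrite /infl1; case: ifP => _; rewrite ?inE H.
Qed.

Lemma infl1_mono (T : finType) (y : T) (A B : {set T}) : A \subset B -> infl1 y A \subset infl1 y B.
Proof.
move=> /subsetP AB; apply/subsetP => -[v|]; rewrite ?infl1_Some ?infl1_None; exact: AB.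
Qed.

Definition piv n (i : 'I_n) j (v : expv n) : expv n :=
  [ffun k => if (k == i) && (j <= v k) then v k - 1 else v k].

Section Lem.
Variables (n : nat) (a : expv n) (i : 'I_n) (j : nat).
Hypothesis j1 : 0 < j.
Hypothesis ja : j <= a i + 1.
Local Notation a' := (addE a i).
Local Notation y := (var a i j).
Local Notation sig := (@sig n a i j).

Lemma yval : (tagged y : nat) = j.-1.
Proof. by rewrite /= inordK //; lia. Qed.

Lemma L1 c : lev c a -> sig @: polL a' (tau i j c) = infl1 y (polL a c).
Proof.
move=> /levP ca; apply/setP => -[[k m]|]; rewrite mem_sig //.
  rewrite infl1_Some !inE /=.
  have mb : (m : nat) <= a k by rewrite -ltnS; exact: ltn_ord m.
  have := ca k.
  case: (eqVneq k i) => [ek|nk].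
    subst k; rewrite inordK; last by apply: ltA; rewrite eqxx; ifs; lia.
    rewrite !ffunE eqxx /=; ifs; lia.
  rewrite inordK; last by apply: ltA; rewrite (negbTE nk); lia.
  by rewrite !ffunE (negbTE nk).
rewrite infl1_None !inE /= inordK; last by (try (apply: ltA; rewrite eqxx)); lia.
rewrite inordK; last by (try (apply: ltA; rewrite eqxx)); lia.
have := ca i; rewrite !ffunE eqxx /=; ifs; lia.
Qed.

Lemma L2 l : sig @: column a' l = infl1 y (column a l).
Proof.
apply/setP => -[[k m]|]; rewrite mem_sig //.
  by rewrite infl1_Some !inE /=.
by rewrite infl1_None !inE /=.
Qed.

Lemma L3 b' : lev b' a' ->
  infl1 y (polU a (subv a (piv i j (subv a' b')))) \subset sig @: polU a' b'.
Proof.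
move=> /levP ba; apply/subsetP => -[[k m]|]; rewrite mem_sig //.
  rewrite infl1_Some !inE /=.
  have mb : (m : nat) <= a k by rewrite -ltnS; exact: ltn_ord m.
  have := ba k.
  case: (eqVneq k i) => [ek|nk].
    subst k; rewrite inordK; last by apply: ltA; rewrite eqxx; ifs; lia.
    rewrite !ffunE eqxx /=; ifs; lia.
  rewrite inordK; last by apply: ltA; rewrite (negbTE nk); lia.
  rewrite !ffunE (negbTE nk) /=; lia.
rewrite infl1_None !inE /= inordK; last by (try (apply: ltA; rewrite eqxx)); lia.
rewrite inordK; last by (try (apply: ltA; rewrite eqxx)); lia.
have := ba i; rewrite !ffunE eqxx /=; ifs; lia.
Qed.

Lemma L4 b : lev b a ->
  sig @: polU a' (subv a' (tau i j.-1 (subv a b))) \subset infl1 y (polU a b).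
Proof.
move=> /levP ba; apply/subsetP => -[[k m]|]; rewrite mem_sig //.
  rewrite infl1_Some !inE /=.
  have mb : (m : nat) <= a k by rewrite -ltnS; exact: ltn_ord m.
  have := ba k.
  case: (eqVneq k i) => [ek|nk].
    subst k; rewrite inordK; last by apply: ltA; rewrite eqxx; ifs; lia.
    rewrite !ffunE eqxx /=; ifs; lia.
  rewrite inordK; last by apply: ltA; rewrite (negbTE nk); lia.
  rewrite !ffunE (negbTE nk) /=; lia.
rewrite infl1_None !inE /= inordK; last by (try (apply: ltA; rewrite eqxx)); lia.
rewrite inordK; last by (try (apply: ltA; rewrite eqxx)); lia.
have := ba i; rewrite !ffunE eqxx /=; ifs; lia.
Qed.

End Lem.



Section Vec.
Variables (n : nat) (i : 'I_n).

Lemma tau_mono m b c : lev b c -> lev (tau i m b) (tau i m c).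
Proof. move=> /levP H; apply/levP => k; have := H k; rewrite !ffunE; case: (eqVneq k i) => [->|nk]; rewrite ?eqxx ?(negbTE nk) /=; ifs; lia. Qed.

Lemma piv_mono m b c : lev b c -> lev (piv i m b) (piv i m c).
Proof. move=> /levP H; apply/levP => k; have := H k; rewrite !ffunE; case: (eqVneq k i) => [->|nk]; rewrite ?eqxx ?(negbTE nk) /=; ifs; lia. Qed.

Lemma piv_tau m c : piv i m (tau i m c) = c.
Proof. apply/ffunP => k; rewrite !ffunE; case: (eqVneq k i) => [->|nk]; rewrite ?eqxx ?(negbTE nk) /=; ifs; lia. Qed.

Lemma piv_tau1 m u : 0 < m -> piv i m (tau i m.-1 u) = u.
Proof. move=> m0; apply/ffunP => k; rewrite !ffunE; case: (eqVneq k i) => [->|nk]; rewrite ?eqxx ?(negbTE nk) /=; ifs; lia. Qed.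

Lemma tau_piv m v : 0 < m -> lev (tau i m (piv i m v)) v.
Proof. move=> m0; apply/levP => k; rewrite !ffunE; case: (eqVneq k i) => [->|nk]; rewrite ?eqxx ?(negbTE nk) /=; ifs; lia. Qed.

Lemma subv_subv (a w : expv n) : lev w a -> subv a (subv a w) = w.
Proof. move=> /levP H; apply/ffunP => k; have := H k; rewrite !ffunE; exact: subKn. Qed.

Lemma subv_lev (a w : expv n) : lev (subv a w) a.
Proof. apply/levP => k; rewrite !ffunE; lia. Qed.
End Vec.

Lemma mem_dual n (a : expv n) C b : (b \in dual_gens a C) = ~~ in_mono C (subv a b) && lev b a.
Proof. by rewrite /dual_gens mem_filter mem_box. Qed.

Section Dual.
Variables (n : nat) (a : expv n) (i : 'I_n) (j : nat) (C : seq (expv n)).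
Hypothesis j1 : 0 < j.
Hypothesis ja : j <= a i + 1.
Local Notation a' := (addE a i).

Lemma DA b' : b' \in dual_gens a' (tri i j C) ->
  subv a (piv i j (subv a' b')) \in dual_gens a C.
Proof.
rewrite !mem_dual subv_lev andbT => /andP[nI _].
have pa : lev (piv i j (subv a' b')) a.
  apply/levP => k; rewrite !ffunE; case: (eqVneq k i) => [->|nk]; rewrite ?eqxx ?(negbTE nk) /=; ifs; lia.
rewrite subv_subv //; apply: contra nI => /hasP[c cC cu].
have [c0 c0m c0c] := mingens_below cC.
apply/hasP; exists (tau i j c0); first exact: map_f.
apply: lev_trans (tau_piv i _ j1); apply: tau_mono; exact: lev_trans c0c cu.
Qed.

Lemma DB b : b \in dual_gens a C ->
  subv a' (tau i j.-1 (subv a b)) \in dual_gens a' (tri i j C).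
Proof.
rewrite !mem_dual subv_lev andbT => /andP[nI _].
have pa : lev (tau i j.-1 (subv a b)) a'.
  apply/levP => k; rewrite !ffunE; case: (eqVneq k i) => [->|nk]; rewrite ?eqxx ?(negbTE nk) /=; ifs; lia.
rewrite subv_subv //; apply: contra nI => /hasP[c' /mapP[c0 c0m ->] cu].
apply/hasP; exists c0; first exact: mingens_sub.
rewrite -(piv_tau i j c0) -(piv_tau1 i (subv a b) j1); exact: piv_mono.
Qed.
End Dual.

Import GRing.Theory.



Section Ideal.
Variables (R : fieldType) (N : nat).
Local Open Scope ring_scope.
Implicit Types (G : seq {mpoly R[N]}) (p q : {mpoly R[N]}).

Lemma in_ideal0 G : in_ideal G 0.
Proof. exists [::]; rewrite big1 // => l _; by rewrite nth_nil mul0r. Qed.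

Lemma in_idealD G p q : in_ideal G p -> in_ideal G q -> in_ideal G (p + q).
Proof.
move=> [c ->] [d ->]; exists (mkseq (fun l => nth 0 c l + nth 0 d l) (size G)).
rewrite -big_split /=; apply: eq_bigr => l _; by rewrite nth_mkseq // mulrDl.
Qed.

Lemma in_idealM G r p : in_ideal G p -> in_ideal G (r * p).
Proof.
move=> [c ->]; exists (mkseq (fun l => r * nth 0 c l) (size G)).
rewrite mulr_sumr; apply: eq_bigr => l _; by rewrite nth_mkseq // mulrA.
Qed.

Lemma in_ideal_gen G g : g \in G -> in_ideal G g.
Proof.
move=> gG; exists (mkseq (fun l => (l == index g G)%:R) (size G)).
have lt : (index g G < size G)%N by rewrite index_mem.
rewrite (bigD1 (Ordinal lt)) //= big1 ?addr0.
  by rewrite nth_mkseq // eqxx mul1r nth_index.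
move=> l nl; rewrite nth_mkseq //; case: eqP => [e|_]; last by rewrite mul0r.
by case/eqP: nl; apply: val_inj.
Qed.

Lemma ideal_sub G1 G2 : (forall g, g \in G1 -> in_ideal G2 g) ->
  forall p, in_ideal G1 p -> in_ideal G2 p.
Proof.
move=> H p [c ->]; apply: (big_ind (in_ideal G2)).
- exact: in_ideal0.
- exact: in_idealD.
- move=> l _; apply: in_idealM; apply: H; exact: mem_nth.
Qed.

Lemma ideal_eqP G1 G2 : (forall g, g \in G1 -> in_ideal G2 g) ->
  (forall g, g \in G2 -> in_ideal G1 g) -> ideal_eq G1 G2.
Proof. move=> H1 H2 p; split; exact: ideal_sub. Qed.

End Ideal.

Lemma monoP_sub (R : fieldType) (W : finType) (X Y : {set W}) : Y \subset X ->
  monoP R X = (monoP R (X :\: Y) * monoP R Y)%R.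
Proof.
move=> YX; rewrite /monoP (big_setID Y) /= mulrC.
by rewrite (setIidPr YX).
Qed.

Lemma ideal_dom (R : fieldType) (W : finType) (F1 F2 : seq {set W}) :
  (forall A, A \in F1 -> exists2 B, B \in F2 & B \subset A) ->
  (forall B, B \in F2 -> exists2 A, A \in F1 & A \subset B) ->
  ideal_eq [seq monoP R A | A <- F1] [seq monoP R A | A <- F2].
Proof.
move=> H1 H2; apply: ideal_eqP => g /mapP[X XF ->].
  have [Y YF YX] := H1 _ XF; rewrite (monoP_sub R YX); apply: in_idealM.
  by apply: in_ideal_gen; apply: map_f.
have [Y YF YX] := H2 _ XF; rewrite (monoP_sub R YX); apply: in_idealM.
by apply: in_ideal_gen; apply: map_f.
Qed.


Lemma polL_mono n (a b c : expv n) : lev b c -> polL a b \subset polL a c.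
Proof. move=> /levP H; apply/subsetP => v; rewrite !inE => h; exact: leq_trans h (H _). Qed.

Lemma polU_mono n (a b c : expv n) : lev b c -> polU a b \subset polU a c.
Proof.
move=> /levP H; apply/subsetP => v; rewrite !inE => h; apply: leq_trans h.
exact: leq_sub2l.
Qed.

Lemma mem_infl (T : finType) (y : T) G B :
  B \in infl y G -> exists2 A, A \in mingens_set G & B = infl1 y A.
Proof. by move/mapP. Qed.

Lemma infl_mem (T : finType) (y : T) G A : A \in mingens_set G -> infl1 y A \in infl y G.
Proof. move=> H; exact: (map_f (infl1 y) H). Qed.

Lemma mem_BM n (a : expv n) C A : A \in BM a C ->
  [\/ exists2 b, b \in mingens C & A = polL a b,
      exists2 b, b \in mingens (dual_gens a C) & A = polU a b |
      exists l, A = column a l].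
Proof.
rewrite /BM !mem_cat => /orP[/mapP[b bm ->]|/orP[/mapP[b bm ->]|/mapP[l _ ->]]].
- by apply: Or31; exists b.
- by apply: Or32; exists b.
- by apply: Or33; exists l.
Qed.

Theorem proposition5p3 (R : fieldType) (n : nat) (a : expv n) (C : seq (expv n)) :
  (forall k : 'I_n, 0 < a k) ->
  (forall c, c \in mingens C -> lev c a) ->
  forall (i : 'I_n) (j : nat), 1 <= j <= a i + 1 ->
  exists sigma : V (addE a i) -> option (V a),
    bijective sigma /\
    ideal_eq
      [seq monoP R (sigma @: A) | A : {set V (addE a i)} <- BM (addE a i) (tri i j C)]
      [seq monoP R A | A : {set option (V a)} <- infl (var a i j) (BM a C)].
Proof.
move=> _ hC i j /andP[j1 ja].
exists (@sig n a i j); split; first exact: sig_bij.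
set s := @sig n a i j.
have -> : [seq monoP R (s @: A) | A : {set V (addE a i)} <- BM (addE a i) (tri i j C)]
  = [seq monoP R A | A <- [seq s @: A | A : {set V (addE a i)} <- BM (addE a i) (tri i j C)]].
  by rewrite -map_comp.
apply: ideal_dom.
- move=> X /mapP[A AB ->].
  suff [A0 A0B sub] : exists2 A0, A0 \in BM a C & infl1 (var a i j) A0 \subset s @: A.
    have [A1 A1m A1s] := mingens_set_below A0B.
    exists (infl1 (var a i j) A1); first exact: infl_mem.
    exact: subset_trans (infl1_mono _ A1s) sub.
  case/mem_BM: AB => [[b' bm ->]|[b' bm ->]|[l ->]].
  + have /mapP[c cm ->] := mingens_sub bm.
    exists (polL a c); first by rewrite /BM mem_cat map_f.
    by rewrite (L1 j1 ja (hC _ cm)).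
  + have bd := mingens_sub bm.
    have ba : lev b' (addE a i) by move: bd; rewrite mem_dual => /andP[].
    have [b0 b0m b0b] := mingens_below (DA j1 ja bd).
    exists (polU a b0); first by rewrite /BM !mem_cat map_f ?orbT.
    apply: subset_trans (L3 j1 ja ba); apply: infl1_mono; exact: polU_mono.
  + exists (column a l); first by rewrite /BM !mem_cat map_f ?orbT ?mem_enum.
    by rewrite (L2 j1 ja).
- move=> B /mem_infl[A0 A0m ->].
  suff [A AB sub] : exists2 A, A \in BM (addE a i) (tri i j C) & s @: A \subset infl1 (var a i j) A0.
    by exists (s @: A); first exact: map_f.
  case/mem_BM: (mingens_set_sub A0m) => [[c cm ->]|[b bm ->]|[l ->]].
  + have [b0 b0m b0c] := mingens_below (map_f (tau i j) cm : tau i j c \in tri i j C).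
    exists (polL (addE a i) b0); first by rewrite /BM mem_cat map_f.
    rewrite -(L1 j1 ja (hC _ cm)); apply: imsetS; exact: polL_mono.
  + have bd := mingens_sub bm.
    have ba : lev b a by move: bd; rewrite mem_dual => /andP[].
    have [b0 b0m b0b] := mingens_below (DB j1 ja bd).
    exists (polU (addE a i) b0); first by rewrite /BM !mem_cat map_f ?orbT.
    apply: subset_trans (L4 j1 ja ba); apply: imsetS; exact: polU_mono.
  + exists (column (addE a i) l); first by rewrite /BM !mem_cat map_f ?orbT ?mem_enum.
    by rewrite (L2 j1 ja).
Qed.
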